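(* Let $T$ be a tiling class (with finite local complexity) and $\mathcal N$ an approximating sub-almost-groupoid of $\mathcal M_{II}$. Then the topology of $\Omega_{\mathcal N}$ is generated by the sets $U_u$ with $u$ a unit of $\mathcal N$.
   Context: A $d$-dimensional tiling is a countable family of bounded closed subsets of $\mathbb R^d$ (tiles, closures of interiors, finitely many decorations) covering $\mathbb R^d$ and overlapping only at boundaries, up to translation; finite local complexity: finitely many classes of pairs of touching tiles. $\mathcal M_{II}$: doubly pointed pattern classes $M_{xy}$; $M_{x_1x_2}\preceq N_{y_1y_2}$ if $N$ contains a translate of $M$ with $x_i$ on $y_i$; $c\vdash c'$ if some $L_{z_1z_2}$ and tile $z$ of $L$ satisfy $c\preceq L_{z_1z}$, $c'\preceq L_{zz_2}$, $cc'$ being the minimal such; $(M_{xy})^{-1}=M_{yx}$; units $M_{xx}$; $L(c)=cc^{-1}$, $R(c)=c^{-1}c$; $\mathrm{rad}(u)$ the largest $r$ such that $u$ covers all $r$-balls centred in its pointed tile. A sub-almost-groupoid is a subset closed under inverses and products of composable elements. Hull $\Omega$: completion of the pointed tilings $T_x$ under $d(\omega,\omega')=e^{-\sup\{r:M_r(\omega)=M_r(\omega')\}}$; $u\preceq\omega$ if $u$ occurs at $\omega$'s pointed tile; $U_u=\{\omega:u\preceq\omega\}$. An approximating sequence is a sequence of units $u_\nu$ with $u_1\cdots u_k\vdash u_{k+1}$ for all $k$ and $\mathrm{rad}(u_\nu)\to\infty$; its limit is the pointed tiling containing all $u_\nu$ at its pointed tile. $\Omega_{\mathcal N}=\bigcup_{c\in\mathcal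 N}U_{R(c)}$ with relative topology; $\mathcal N$ is approximating if every $\omega\in\Omega_{\mathcal N}$ is the limit of an approximating sequence with elements in $\mathcal N$. *)

(* Defs.v *)
From HB Require Import structures.
From mathcomp Require Import all_boot all_order all_algebra.
From mathcomp Require Import all_classical all_reals all_analysis.
Set Implicit Arguments. Unset Strict Implicit. Unset Printing Implicit Defensive.
Import Order.TTheory GRing.Theory Num.Theory.
Import numFieldNormedType.Exports.
Local Open Scope classical_set_scope.
Local Open Scope ring_scope.

Section Tilings.
Variables (R : realType) (d : nat) (L : Type).

Definition point := 'rV[R]_d.

Definition edist (p q : point) : R := Num.sqrt (\sum_(i < d) (p 0 i - q 0 i) ^+ 2).
Definition eball (c : point) (r : R) : set point := [set p | edist p c < r].

(* a (decorated) tile: support in R^d together with its decoration *)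
Definition tile := (set point * L)%type.

Definition is_tile (t : tile) : Prop :=
  bounded_set t.1 /\ closed t.1 /\ closure (interior t.1) = t.1 /\ t.1 !=set0.

Definition tr (a : point) (t : tile) : tile := ([set p + a | p in t.1], t.2).
Definition shift_pat (a : point) (P : set tile) : set tile := [set tr a t | t in P].

Definition is_tiling (S : set tile) : Prop :=
  (forall t, S t -> is_tile t) /\ countable S /\
  (forall p : point, exists t, S t /\ t.1 p) /\
  (forall t t', S t -> S t' -> t <> t' -> interior t.1 `&` interior t'.1 = set0).

Definition FLC (S : set tile) : Prop :=
  exists F : set (tile * tile), finite_set F /\
    forall t t', S t -> S t' -> t <> t' -> t.1 `&` t'.1 !=set0 ->
      exists pr a, F pr /\ t = tr a pr.1 /\ t' = tr a pr.2.

(* (P, x, y) : the pattern P with the two distinguished tiles x and y *)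
Definition dpp := (set tile * tile * tile)%type.
Definition dpat (c : dpp) := c.1.1.
Definition dfst (c : dpp) := c.1.2.
Definition dsnd (c : dpp) := c.2.

Definition is_dpp (T : set tile) (c : dpp) : Prop :=
  finite_set (dpat c) /\ dpat c `<=` T /\ dpat c (dfst c) /\ dpat c (dsnd c).

Definition dpp_equiv (c c' : dpp) : Prop :=
  exists a, dpat c' = shift_pat a (dpat c) /\ dfst c' = tr a (dfst c) /\
            dsnd c' = tr a (dsnd c).

Definition dpp_le (c c' : dpp) : Prop :=
  exists a, shift_pat a (dpat c) `<=` dpat c' /\ tr a (dfst c) = dfst c' /\
            tr a (dsnd c) = dsnd c'.

Definition dinv (c : dpp) : dpp := (dpat c, dsnd c, dfst c).
Definition is_unit (c : dpp) : Prop := dfst c = dsnd c.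

Definition composable (T : set tile) (c c' : dpp) : Prop :=
  exists Lp z1 z2 z, is_dpp T (Lp, z1, z) /\ is_dpp T (Lp, z, z2) /\
    dpp_le c (Lp, z1, z) /\ dpp_le c' (Lp, z, z2).

Definition is_prod (T : set tile) (c c' p : dpp) : Prop :=
  is_dpp T p /\
  (exists z, dpat p z /\ dpp_le c (dpat p, dfst p, z) /\ dpp_le c' (dpat p, z, dsnd p)) /\
  (forall Lp z1 z2 z, is_dpp T (Lp, z1, z2) -> Lp z ->
     dpp_le c (Lp, z1, z) -> dpp_le c' (Lp, z, z2) -> dpp_le p (Lp, z1, z2)).

(* a subset of M_II, represented by a translation-saturated predicate on
   representatives, which is closed under inverses and composable products *)
Definition sub_almost_groupoid (T : set tile) (N : set dpp) : Prop :=
  (forall c, N c -> is_dpp T c) /\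
  (forall c c', is_dpp T c' -> dpp_equiv c c' -> N c -> N c') /\
  (forall c, N c -> N (dinv c)) /\
  (forall c c' p, N c -> N c' -> composable T c c' -> is_prod T c c' p -> N p).

Definition rad (u : dpp) : \bar R :=
  ereal_sup [set r%:E | r in [set r : R | forall c, (dfst u).1 c ->
               eball c r `<=` \bigcup_(t in dpat u) t.1]].

Definition ptiling := (set tile * tile)%type.

Definition Mr (w : ptiling) (r : R) : ptiling :=
  ([set t | w.1 t /\ exists c p, w.2.1 c /\ t.1 p /\ edist p c <= r], w.2).

Definition ppat_equiv (P P' : ptiling) : Prop :=
  exists a, P'.1 = shift_pat a P.1 /\ P'.2 = tr a P.2.

Definition hdist (w w' : ptiling) : \bar R :=
  expeR (- ereal_sup [set r%:E | r in [set r : R | (0 <= r)%R /\ ppat_equiv (Mr w r) (Mr w' r)]])%E.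

(* Omega: completion of {T_x}, realised as its closure among pointed tilings *)
Definition hull (T : set tile) : set ptiling :=
  [set w | is_tiling w.1 /\ w.1 w.2 /\
     forall e : R, 0 < e -> exists x, T x /\ (hdist w (T, x) < e%:E)%E].

Definition occurs (u : dpp) (w : ptiling) : Prop :=
  exists a, shift_pat a (dpat u) `<=` w.1 /\ tr a (dfst u) = w.2 /\ tr a (dsnd u) = w.2.

Definition U_set (T : set tile) (u : dpp) : set ptiling :=
  [set w | hull T w /\ occurs u w].

Definition OmegaN (T : set tile) (N : set dpp) : set ptiling :=
  [set w | exists c, N c /\ exists p, is_prod T (dinv c) c p /\ U_set T p w].

(* approximating sequences (indexed from 0) *)
Definition approx_seq (T : set tile) (u : nat -> dpp) : Prop :=
  (forall n, is_unit (u n)) /\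
  (exists P : nat -> dpp, P 0%N = u 0%N /\
     forall k, composable T (P k) (u k.+1) /\ is_prod T (P k) (u k.+1) (P k.+1)) /\
  (forall M : R, exists n0, forall n, (n0 <= n)%N -> (M%:E < rad (u n))%E).

Definition is_limit (u : nat -> dpp) (w : ptiling) : Prop := forall n, occurs (u n) w.

Definition approximating (T : set tile) (N : set dpp) : Prop :=
  forall w, OmegaN T N w -> exists u : nat -> dpp,
    (forall n, N (u n)) /\ approx_seq T u /\ is_limit u w.

Definition hull_open (T : set tile) (V : set ptiling) : Prop :=
  V `<=` hull T /\
  forall w, V w -> exists e : R, 0 < e /\
    forall w', hull T w' -> (hdist w w' < e%:E)%E -> V w'.

Definition relopen (T : set tile) (N : set dpp) (O : set ptiling) : Prop :=
  exists V, hull_open T V /\ O = V `&` OmegaN T N.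

(* open subsets of Omega_N in the topology generated by the U_u, u unit of N:
   every point has a neighbourhood which is a finite intersection of such U_u *)
Definition gen_open (T : set tile) (N : set dpp) (O : set ptiling) : Prop :=
  O `<=` OmegaN T N /\
  forall w, O w -> exists F : set dpp, finite_set F /\
    (forall u, F u -> N u /\ is_unit u) /\
    (forall u, F u -> U_set T u w) /\
    (forall w', OmegaN T N w' -> (forall u, F u -> U_set T u w') -> O w').

End Tilings.

(* Main.v *)
Require Import Defs.
From HB Require Import structures.
From mathcomp Require Import all_boot all_order all_algebra.
From mathcomp Require Import all_classical all_reals all_analysis.
From mathcomp Require Import lra.
Set Implicit Arguments. Unset Strict Implicit. Unset Printing Implicit Defensive.
Import Order.TTheory GRing.Theory Num.Theory.
Import numFieldNormedType.Exports.
Local Open Scope classical_set_scope.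
Local Open Scope ring_scope.

Lemma seq_bound (R : realType) (s : seq R) : exists M : R, forall y, y \in s -> y <= M.
Proof.
elim: s => [|x s [M HM]]; first by exists 0.
exists (Num.max x M) => y; rewrite in_cons => /orP [/eqP ->|/HM yM].
  by rewrite le_max lexx.
by rewrite le_max yM orbT.
Qed.

Lemma fin_unif (R : realType) (X : Type) (A : set X) (Q : X -> R -> Prop) :
  finite_set A -> (forall x, A x -> exists r, Q x r) ->
  (forall x r r', r <= r' -> Q x r -> Q x r') -> exists r, forall x, A x -> Q x r.
Proof.
move=> fA hQ mQ.
have : forall x, exists r, A x -> Q x r.
  move=> x; case: (pselect (A x)) => Ax; last by exists 0.
  by case: (hQ x Ax) => r hr; exists r.
case/choice => f hf.
have /finite_seqP [Y hY] : finite_set (f @` A) by exact: finite_image.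
case: (seq_bound Y) => M HM.
exists M => x Ax; apply: (mQ x (f x)); last exact: hf.
apply: HM.
have : [set` Y] (f x) by rewrite -hY; exists x.
by [].
Qed.

Lemma exists_small_exp (R : realType) (e : R) : 0 < e -> exists r : R, 0 <= r /\ expR (- r) < e.
Proof.
move=> e0.
have h1 : 0 <= Num.max 0 (- ln e) by rewrite le_max lexx.
have h2 : - ln e <= Num.max 0 (- ln e) by rewrite le_max lexx orbT.
exists (Num.max 0 (- ln e) + 1); split; first lra.
rewrite -{2}(@lnK _ e); last by rewrite posrE.
rewrite ltr_expR; lra.
Qed.

Section Aux.
Variables (R : realType) (d : nat) (L : Type).
Local Notation point := (Defs.point R d).
Local Notation tile := (Defs.tile R d L).
Local Notation edist := (@Defs.edist R d).
Local Notation eball := (@Defs.eball R d).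
Local Notation tr := (@Defs.tr R d L).
Local Notation Mr := (@Defs.Mr R d L).

Lemma tr_add (a b : point) (t : tile) : tr b (tr a t) = tr (a + b) t.
Proof.
rewrite /tr /=; congr pair; rewrite image_comp; apply: eq_imagel => x _ /=.
by rewrite addrA.
Qed.

Lemma tr0 (t : tile) : tr 0 t = t.
Proof.
case: t => A l; rewrite /tr /=; congr pair.
rewrite (eq_imagel (f' := id)); first exact: image_id.
by move=> x _; rewrite addr0.
Qed.

Lemma edist_tr (p c a : point) : edist (p + a) (c + a) = edist p c.
Proof.
rewrite /edist; congr Num.sqrt; apply: eq_bigr => i _; rewrite !mxE.
by rewrite opprD addrACA subrr addr0.
Qed.

Lemma sum_cont (s : seq 'I_d) (h : 'I_d -> point -> R) :
  (forall i, continuous (h i)) -> continuous (fun p => \sum_(i <- s) h i p).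
Proof.
move=> hc; elim: s => [|i s IH].
  under eq_fun do rewrite big_nil. exact: cst_continuous.
under eq_fun do rewrite big_cons.
move=> x; exact: (continuousD (hc i x) (IH x)).
Qed.

Lemma edist_cont (c : point) : continuous (fun p => edist p c).
Proof.
move=> x; rewrite /edist.
apply: (continuous_comp (f := fun p : point => \sum_(i < d) (p 0 i - c 0 i) ^+ 2)); last exact: sqrt_continuous.
apply: (sum_cont (s := index_enum _) (h := fun i p => (p 0 i - c 0 i) ^+ 2)).
move=> i y; rewrite /GRing.exp /=.
have hb : {for y, continuous (fun p : point => p 0 i - c 0 i)}.
  apply: (continuousB (f := fun p : point => p 0 i)); first exact: coord_continuous.
  exact: cst_continuous.
exact: (continuousM hb hb).
Qed.

Lemma eball_open (c : point) r : open (eball c r).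
Proof.
rewrite /eball.
have -> : [set p | edist p c < r] = (fun p => edist p c) @^-1` [set x | x < r] by [].
apply: open_comp; last exact: open_lt.
move=> x _; exact: edist_cont.
Qed.

Lemma key (u : dpp R d L) (w : ptiling R d L) (a : point) (r' : R) (c p : point) (t : tile) :
 is_tiling w.1 -> shift_pat a (dpat u) `<=` w.1 -> tr a (dfst u) = w.2 ->
 (forall c0, (dfst u).1 c0 -> eball c0 r' `<=` \bigcup_(s in dpat u) s.1) ->
 w.2.1 c -> w.1 t -> t.1 p -> edist p c < r' ->
 exists2 s, dpat u s & t = tr a s.
Proof.
move=> [hT [_ [_ hD]]] hsub hf hrad hc ht htp hpc.
have [c0 hc0 ec] : exists2 c0, (dfst u).1 c0 & c0 + a = c.
  by move: hc; rewrite -hf /= => -[c0 h <-]; exists c0.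
subst c.
have [_ [_ [hint _]]] := hT t ht.
have : closure (interior t.1) p by rewrite hint.
move=> /(_ (eball (c0 + a) r')) [].
  by apply: open_nbhs_nbhs; split; [exact: eball_open | exact: hpc].
move=> q [hq1 hq2].
have : eball c0 r' (q - a) by rewrite /eball /= -(edist_tr (q - a) c0 a) subrK.
move/(hrad c0 hc0) => [s hs hsq].
exists s => //.
apply: contrapT => hne'.
have hts : w.1 (tr a s) by apply: hsub; exists s.
have e := hD t (tr a s) ht hts hne'.
have [_ [_ [hint' _]]] := hT _ hts.
have hq3 : (tr a s).1 q by exists (q - a) => //; rewrite subrK.
have : closure (interior (tr a s).1) q by rewrite hint'.
move=> /(_ (interior t.1)) [].
  exact: nbhs_interior.
move=> y [hy1 hy2].
have : (interior t.1 `&` interior (tr a s).1) y by split.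
by rewrite e.
Qed.

Lemma Mr_shift (u : dpp R d L) (w w' : ptiling R d L) (a a' : point) (r r' : R) :
 is_tiling w.1 -> shift_pat a (dpat u) `<=` w.1 -> tr a (dfst u) = w.2 ->
 shift_pat a' (dpat u) `<=` w'.1 -> tr a' (dfst u) = w'.2 ->
 (forall c0, (dfst u).1 c0 -> eball c0 r' `<=` \bigcup_(s in dpat u) s.1) -> r < r' ->
 forall t, (Mr w r).1 t -> (Mr w' r).1 (tr (a' - a) t).
Proof.
move=> hT hs hf hs' hf' hrad hr t [ht [c [p [hc [hp hpc]]]]].
have [s hsu ets] := key hT hs hf hrad hc ht hp (le_lt_trans hpc hr).
have e2 : w'.2 = tr (a' - a) w.2 by rewrite -hf -hf' tr_add addrC subrK.
have E : tr (a' - a) t = tr a' s by rewrite ets tr_add addrC subrK.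
split; first by rewrite E; apply: hs'; exists s.
exists (c + (a' - a)), (p + (a' - a)); split; [|split].
- by rewrite e2; exists c.
- by exists p.
- by rewrite edist_tr.
Qed.

Lemma Mr_equiv (u : dpp R d L) (w w' : ptiling R d L) (a a' : point) (r r' : R) :
 is_tiling w.1 -> is_tiling w'.1 -> shift_pat a (dpat u) `<=` w.1 -> tr a (dfst u) = w.2 ->
 shift_pat a' (dpat u) `<=` w'.1 -> tr a' (dfst u) = w'.2 ->
 (forall c0, (dfst u).1 c0 -> eball c0 r' `<=` \bigcup_(s in dpat u) s.1) -> r < r' ->
 ppat_equiv (Mr w r) (Mr w' r).
Proof.
move=> hT hT' hs hf hs' hf' hrad hr.
exists (a' - a); split; last by rewrite /= -hf -hf' tr_add addrC subrK.
apply/seteqP; split.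
- move=> t' ht'.
  have h := Mr_shift hT' hs' hf' hs hf hrad hr ht'.
  exists (tr (a - a') t') => //.
  by rewrite tr_add addrA subrK subrr tr0.
- by move=> _ [t ht <-]; exact: (Mr_shift hT hs hf hs' hf' hrad hr).
Qed.

End Aux.

Theorem mainTheorem11 (R : realType) (d : nat) (L : Type)
  (T : set (tile R d L)) (N : set (dpp R d L)) :
  is_tiling T -> FLC T ->
  sub_almost_groupoid T N -> approximating T N ->
  forall O : set (ptiling R d L), O `<=` OmegaN T N ->
    (relopen T N O <-> gen_open T N O).
Proof.
move=> hT hFLC hN happ O hO; split.
- case=> V [[hVh hVo] ->]; split; first exact: subIsetr.
  move=> w [hVw hOw].
  have [e [e0 he]] := hVo w hVw.
  have [u [huN [[hunit [_ hrad]] hlim]]] := happ w hOw.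
  have [r [r0 hr]] := exists_small_exp e0.
  have [n hn] := hrad r.
  have := hn n (leqnn n).
  move=> /ereal_sup_gt [_ [r' hr'set <-]] hrr'.
  rewrite lte_fin in hrr'.
  have hullw : hull T w := hVh w hVw.
  exists [set u n]; split; first exact: finite_set1.
  split; first by move=> v ->; split.
  split; first by move=> v ->; split => //; exact: hlim.
  move=> w' hw' hU.
  have [hullw' hocc'] := hU (u n) erefl.
  split => //; apply: (he w' hullw').
  have [a [hs [hf _]]] := hlim n.
  have [a' [hs' [hf' _]]] := hocc'.
  have heq := Mr_equiv hullw.1 hullw'.1 hs hf hs' hf' hr'set hrr'.
  rewrite /hdist; apply: (le_lt_trans (y := expeR (- r%:E))).
    rewrite lee_expeR leeN2; apply: ereal_sup_ubound; exists r => //.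
  by rewrite /= lte_fin.
- move=> [hOs hg].
  exists [set w | hull T w /\ exists F : set (dpp R d L), finite_set F /\
     (forall u, F u -> finite_set (dpat u)) /\ (forall u, F u -> occurs u w) /\
     (forall w'', OmegaN T N w'' -> (forall u, F u -> U_set T u w'') -> O w'')].
  split; last first.
    apply/seteqP; split.
    + move=> w Ow.
      have hOm := hOs w Ow.
      have [F [fF [fU [Uw hF]]]] := hg w Ow.
      split => //.
      have [c [_ [p [_ [hw _]]]]] := hOm.
      split => //; exists F; split => //; split.
        by move=> u Fu; have [hd _] := hN; have [? _] := hd u (fU u Fu).1.
      by split => // u Fu; have [] := Uw u Fu.
    + move=> w [[hw [F [_ [_ [occ hF]]]]] hOm].
      by apply: hF => // u Fu; split => //; exact: occ.
  split; first by move=> w [].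
  move=> w [hw [F [fF [fP [occ hO']]]]].
  pose Q := fun u r => exists a, shift_pat a (dpat u) `<=` w.1 /\
      tr a (dfst u) = w.2 /\ tr a (dsnd u) = w.2 /\
      forall s, dpat u s -> (Mr w r).1 (tr a s).
  have H1 : forall u, F u -> exists r, Q u r.
    move=> u Fu.
    have [a [hs [hf hf2]]] := occ u Fu.
    have [hTw [hw2 _]] := hw.
    have [c hc] := (hTw.1 _ hw2).2.2.2.
    pose Q2 := fun s r => (Mr w r).1 (tr a s).
    have H3 : forall s, dpat u s -> exists r, Q2 s r.
      move=> s hsu.
      have hts : w.1 (tr a s) by apply: hs; exists s.
      have [p hp] := (hTw.1 _ hts).2.2.2.
      exists (Defs.edist p c); split => //; exists c, p; split => //.
    have H4 : forall s r1 r2, r1 <= r2 -> Q2 s r1 -> Q2 s r2.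
      move=> s r1 r2 h12 [h1 [c1 [p1 [hc1 [hp1 hle]]]]]; split => //.
      by exists c1, p1; split => //; split => //; exact: le_trans hle h12.
    have [ru hru] := fin_unif (fP u Fu) H3 H4.
    by exists ru, a.
  have H2 : forall u r1 r2, r1 <= r2 -> Q u r1 -> Q u r2.
    move=> u r1 r2 h12 [a [h1 [h2 [h3 h4]]]]; exists a; split => //; split => //; split => //.
    move=> s hs; have [h5 [c1 [p1 [hc1 [hp1 hle]]]]] := h4 s hs; split => //.
    by exists c1, p1; split => //; split => //; exact: le_trans hle h12.
  have [r hr] := fin_unif fF H1 H2.
  exists (expR (- r)); split; first exact: expR_gt0.
  move=> w'' hw'' hd.
  have : (r%:E < ereal_sup [set r%:E | r in [set r : R | (0 <= r)%R /\ ppat_equiv (Mr w r) (Mr w'' r)]])%E.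
    move: hd; rewrite /hdist.
    have -> : (expR (- r))%:E = expeR (- r%:E)%E by [].
    by rewrite lte_expeR lteN2.
  move/ereal_sup_gt => [_ [r'' [hr0 [b [e1 e2]]]] <-] hrr.
  rewrite lte_fin in hrr.
  split => //; exists F; split => //; split => //; split => //.
  move=> v Fv; have [a [hs [hf [hf2 hM]]]] := hr v Fv.
  exists (a + b); split; [|split].
  + move=> _ [s hs0 <-]; rewrite -tr_add.
    have [h1 [c1 [p1 [hc1 [hp1 hle]]]]] := hM s hs0.
    have hm : (Mr w r'').1 (tr a s).
      by split => //; exists c1, p1; split => //; split => //; exact: le_trans hle (ltW hrr).
    have : (Mr w'' r'').1 (tr b (tr a s)) by rewrite e1; exists (tr a s).
    by case.
  + by rewrite -tr_add hf; exact: esym.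
  + by rewrite -tr_add hf2; exact: esym.
Qed.
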